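(* Let $\alpha\in(0,1]$ and let $n$ be such that $n^\alpha=2^q$ for a positive integer $q$. Let $R\subset\mathrm{conv}(A_n)$ be an open axis-aligned rectangle such that either [$w(R)>1$ and $h(R)>n^\alpha$] or [$w(R)>n^\alpha$ and $h(R)>1$]. Then $R$ contains a point of $B_n$ lying on a forward diagonal and a point of $B_n$ lying on a backward diagonal.
   Context: Let $A_n=\{(i,j)\in\mathbb{Z}^2: 0\le i,j\le 14n\}$, so $\mathrm{conv}(A_n)=[0,14n]^2$. The sparse grid $B_n\subseteq A_n$ is the set of points of $A_n$ of at least one of the following forms: (1) $(i,j)$ with $n^\alpha \mid ij$; (2) $(i+k,j+k)$ with $n^\alpha\mid i$, $n^\alpha\mid j$, $k\in\{1,\dots,n^\alpha\}$; (3) $(i+k,j-k)$ with $n^\alpha\mid i$, $n^\alpha\mid j$, $k\in\{1,\dots,n^\alpha\}$. A point of $A_n$ of form (2) is said to lie on a forward diagonal, and a point of $A_n$ of form (3) on a backward diagonal. For an open rectangle $R=(x_1,x_2)\times(y_1,y_2)$, $w(R)=x_2-x_1$ and $h(R)=y_2-y_1$. *)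

(* Defs.v *)
From Stdlib Require Export Reals ZArith.
Open Scope R_scope.

Definition in_A (n : nat) (p : Z * Z) : Prop :=
  (0 <= fst p <= 14 * Z.of_nat n)%Z /\ (0 <= snd p <= 14 * Z.of_nat n)%Z.

(* m plays the role of n^alpha (an integer, = 2^q). *)
Definition form1 (m : Z) (p : Z * Z) : Prop := (m | fst p * snd p)%Z.

Definition forward_diag (m : Z) (p : Z * Z) : Prop :=
  exists i j k : Z, (m | i)%Z /\ (m | j)%Z /\ (1 <= k <= m)%Z /\
                    p = (i + k, j + k)%Z.

Definition backward_diag (m : Z) (p : Z * Z) : Prop :=
  exists i j k : Z, (m | i)%Z /\ (m | j)%Z /\ (1 <= k <= m)%Z /\
                    p = (i + k, j - k)%Z.

Definition in_B (n : nat) (m : Z) (p : Z * Z) : Prop :=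
  in_A n p /\ (form1 m p \/ forward_diag m p \/ backward_diag m p).

Definition in_open_rect (x1 x2 y1 y2 : R) (p : Z * Z) : Prop :=
  x1 < IZR (fst p) < x2 /\ y1 < IZR (snd p) < y2.

(* Main.v *)
Require Import Defs.
From Stdlib Require Import Reals ZArith Lia Lra.
Open Scope R_scope.

Lemma int_in (x1 x2 : R) : x2 - x1 > 1 -> exists a : Z, x1 < IZR a < x2.
Proof.
  intros H. destruct (archimed x1) as [H1 H2]. exists (up x1). lra.
Qed.

Lemma res_in (m r : Z) (y1 y2 : R) : (0 < m)%Z -> y2 - y1 > IZR m ->
  exists b : Z, y1 < IZR b < y2 /\ (b mod m = r mod m)%Z.
Proof.
  intros Hm H. destruct (archimed y1) as [H1 H2].
  set (c := up y1) in *.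
  set (t := ((r - c) mod m)%Z).
  assert (Ht : (0 <= t < m)%Z) by (apply Z.mod_pos_bound; lia).
  exists (c + t)%Z. split.
  - rewrite plus_IZR.
    assert (0 <= IZR t) by (apply IZR_le; lia).
    assert (IZR t <= IZR m - 1).
    { rewrite <- minus_IZR. apply IZR_le. lia. }
    lra.
  - unfold t. rewrite Zplus_mod_idemp_r. f_equal. ring.
Qed.

Lemma fwd_char (m a b : Z) : (0 < m)%Z -> (a mod m = b mod m)%Z ->
  forward_diag m (a, b).
Proof.
  intros Hm Hab.
  pose proof (Z_div_mod_eq_full (a - 1) m) as E1.
  pose proof (Z_div_mod_eq_full a m) as E2.
  pose proof (Z_div_mod_eq_full b m) as E3.
  pose proof (Z.mod_pos_bound (a - 1) m Hm) as B.
  set (r := ((a - 1) mod m)%Z) in *.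
  set (z := ((a - 1) / m)%Z) in *.
  exists (a - (r + 1))%Z, (b - (r + 1))%Z, (r + 1)%Z.
  split; [|split; [|split]].
  - exists z. nia.
  - exists (b / m - a / m + z)%Z. rewrite Hab in E2. nia.
  - lia.
  - f_equal; ring.
Qed.

Lemma bwd_char (m a b : Z) : (0 < m)%Z -> ((a + b) mod m = 0)%Z ->
  backward_diag m (a, b).
Proof.
  intros Hm Hab.
  pose proof (Z_div_mod_eq_full (a - 1) m) as E1.
  pose proof (Z_div_mod_eq_full (a + b) m) as E2.
  pose proof (Z.mod_pos_bound (a - 1) m Hm) as B.
  set (r := ((a - 1) mod m)%Z) in *.
  set (z := ((a - 1) / m)%Z) in *.
  exists (a - (r + 1))%Z, (b + (r + 1))%Z, (r + 1)%Z.
  split; [|split; [|split]].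
  - exists z. nia.
  - exists ((a + b) / m - z)%Z. rewrite Hab in E2. nia.
  - lia.
  - f_equal; ring.
Qed.

Lemma inA_of (n : nat) (x1 x2 y1 y2 : R) (p : Z * Z) :
  0 <= x1 -> x2 <= 14 * INR n -> 0 <= y1 -> y2 <= 14 * INR n ->
  in_open_rect x1 x2 y1 y2 p -> in_A n p.
Proof.
  intros h1 h2 h3 h4 [[a1 a2] [b1 b2]].
  rewrite INR_IZR_INZ in h2, h4.
  rewrite <- mult_IZR in h2, h4.
  assert (0 < IZR (fst p)) by lra.
  assert (0 < IZR (snd p)) by lra.
  assert (IZR (fst p) < IZR (14 * Z.of_nat n)) by lra.
  assert (IZR (snd p) < IZR (14 * Z.of_nat n)) by lra.
  apply lt_IZR in H, H0, H1, H2.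
  unfold in_A. lia.
Qed.

Theorem lemma5 (alpha : R) (n q : nat) :
  0 < alpha <= 1 ->
  (0 < q)%nat ->
  Rpower (INR n) alpha = 2 ^ q ->
  forall x1 x2 y1 y2 : R,
    (* R = (x1,x2) x (y1,y2) is an open rectangle contained in [0,14n]^2 *)
    x1 < x2 -> y1 < y2 ->
    0 <= x1 -> x2 <= 14 * INR n -> 0 <= y1 -> y2 <= 14 * INR n ->
    ((x2 - x1 > 1 /\ y2 - y1 > Rpower (INR n) alpha) \/
     (x2 - x1 > Rpower (INR n) alpha /\ y2 - y1 > 1)) ->
    (exists p : Z * Z, in_B n (2 ^ Z.of_nat q)%Z p /\
        forward_diag (2 ^ Z.of_nat q)%Z p /\ in_open_rect x1 x2 y1 y2 p) /\
    (exists p : Z * Z, in_B n (2 ^ Z.of_nat q)%Z p /\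
        backward_diag (2 ^ Z.of_nat q)%Z p /\ in_open_rect x1 x2 y1 y2 p).
Proof.
  intros Ha Hq Hp x1 x2 y1 y2 Hx Hy h1 h2 h3 h4 Hcase.
  rewrite Hp in Hcase.
  set (m := (2 ^ Z.of_nat q)%Z).
  assert (Hm : (0 < m)%Z) by (apply Z.pow_pos_nonneg; lia).
  assert (Em : IZR m = 2 ^ q) by (unfold m; rewrite pow_IZR; reflexivity).
  rewrite <- Em in Hcase.
  assert (key : forall p, in_open_rect x1 x2 y1 y2 p -> in_A n p)
    by (intros p0 Hp0; exact (inA_of n x1 x2 y1 y2 p0 h1 h2 h3 h4 Hp0)).
  destruct Hcase as [[Hw Hh] | [Hw Hh]].
  - destruct (int_in _ _ Hw) as [a Ha'].
    destruct (res_in m a _ _ Hm Hh) as [b [Hb Hbm]].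
    destruct (res_in m (- a) _ _ Hm Hh) as [b' [Hb' Hbm']].
    split.
    + exists (a, b).
      assert (F : forward_diag m (a, b)) by (apply fwd_char; auto).
      assert (O : in_open_rect x1 x2 y1 y2 (a, b)) by (split; simpl; lra).
      split; [split; [apply key; auto | auto] | auto].
    + exists (a, b').
      assert (F : backward_diag m (a, b')).
      { apply bwd_char; auto. rewrite Zplus_mod, Hbm', <- Zplus_mod.
        replace (a + - a)%Z with 0%Z by ring. apply Z.mod_0_l; lia. }
      assert (O : in_open_rect x1 x2 y1 y2 (a, b')) by (split; simpl; lra).
      split; [split; [apply key; auto | auto] | auto].
  - destruct (int_in _ _ Hh) as [b Hb'].
    destruct (res_in m b _ _ Hm Hw) as [a [Ha' Ham]].
    destruct (res_in m (- b) _ _ Hm Hw) as [a' [Ha'' Ham']].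
    split.
    + exists (a, b).
      assert (F : forward_diag m (a, b)) by (apply fwd_char; auto).
      assert (O : in_open_rect x1 x2 y1 y2 (a, b)) by (split; simpl; lra).
      split; [split; [apply key; auto | auto] | auto].
    + exists (a', b).
      assert (F : backward_diag m (a', b)).
      { apply bwd_char; auto. rewrite Zplus_mod, Ham', <- Zplus_mod.
        replace (- b + b)%Z with 0%Z by ring. apply Z.mod_0_l; lia. }
      assert (O : in_open_rect x1 x2 y1 y2 (a', b)) by (split; simpl; lra).
      split; [split; [apply key; auto | auto] | auto].
Qed.
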